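(* The algebra $\mathcal{S}$ is a quasimodular algebra. More precisely, for every $n\ge1$ and all positive even integers $k_1,\dots,k_n$, $$\langle S_{k_1}S_{k_2}\cdots S_{k_n}\rangle_q=\sum_{\alpha\in\Pi(n)}\prod_{A\in\alpha}D^{|A|-1}G_{k_A-2|A|+2},\qquad k_A:=\sum_{a\in A}k_a .$$
   Context: Partitions $\lambda=(\lambda_1\ge\lambda_2\ge\dots)$, $|\lambda|=\sum\lambda_i$, $\mathscr{P}$ the set of all partitions. For $f:\mathscr{P}\to\mathbb{Q}$, $\langle f\rangle_q=\frac{\sum_\lambda f(\lambda)q^{|\lambda|}}{\sum_\lambda q^{|\lambda|}}\in\mathbb{Q}[[q]]$. For even $k\ge2$, $S_k(\lambda)=-\frac{B_k}{2k}+\sum_i\lambda_i^{k-1}$ ($B_k$ Bernoulli numbers), and $\mathcal{S}$ is the algebra generated by these under the pointwise product, graded by giving $S_{k_1}\cdots S_{k_n}$ weight $\sum k_i$. A quasimodular algebra is a graded space of functions $\mathscr{P}\to\mathbb{Q}$ such that the $q$-bracket of every homogeneous element of weight $k$ is a quasimodular form of weight $k$ for $\mathrm{SL}_2(\mathbb{Z})$. $G_k=-\frac{B_k}{2k}+\sum_{m,r\ge1}m^{k-1}q^{mr}$ ($k\ge2$ even) are Eisenstein series and $D=q\frac{d}{dq}$. $\Pi(n)$ is the set of set partitions of $\{1,\dots,n\}$ (each $\alpha\in\Pi(n)$ is a set of disjoint nonempty blocks $A$ with union $\{1,\dots,n\}$). *)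

(* Defs.v *)
From mathcomp Require Import all_boot all_order all_algebra.
Set Implicit Arguments. Unset Strict Implicit. Unset Printing Implicit Defensive.
Import Order.TTheory GRing.Theory Num.Theory.
Local Open Scope ring_scope.

Fixpoint bernoulli_seq (m : nat) : seq rat :=
  match m with
  | 0%N => [:: 1]
  | m'.+1 => let s := bernoulli_seq m' in
      rcons s (- (\sum_(j < m'.+1) ('C(m'.+2, j))%:R * nth 0 s j) / (m'.+2)%:R)
  end.
Definition bernoulli (m : nat) : rat := nth 0 (bernoulli_seq m) m.

Definition fps := nat -> rat.
Definition fzero : fps := fun _ => 0.
Definition fone : fps := fun N => if N == 0%N then 1 else 0.
Definition fadd (a b : fps) : fps := fun N => a N + b N.
Definition fmul (a b : fps) : fps := fun N => \sum_(i < N.+1) a i * b (N - i)%N.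
Fixpoint finv_seq (a : fps) (N : nat) : seq rat :=
  match N with
  | 0%N => [:: (a 0%N)^-1]
  | N'.+1 => let s := finv_seq a N' in
      rcons s (- (\sum_(i < N'.+1) a i.+1 * nth 0 s (N' - i)%N) / a 0%N)
  end.
Definition finv (a : fps) : fps := fun N => nth 0 (finv_seq a N) N.
(* D = q d/dq *)
Definition Dq (a : fps) : fps := fun N => N%:R * a N.

Definition is_partition (l : seq nat) : bool :=
  sorted geq l && all (fun x => 0 < x)%N l.
Definition psize (l : seq nat) : nat := sumn l.

(* sum of f over all partitions of N; a partition of N is encoded (bijectively)
   as a nonincreasing N-tuple of entries in {0..N} with sum N, padded by zeros. *)
Definition sum_partitions (N : nat) (f : seq nat -> rat) : rat :=
  \sum_(t : N.-tuple 'I_N.+1 |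
          sorted geq (map val t) && (sumn (map val t) == N))
     f [seq x <- map val t | (0 < x)%N].

Definition qnum (f : seq nat -> rat) : fps := fun N => sum_partitions N f.
Definition qbracket (f : seq nat -> rat) : fps :=
  fmul (qnum f) (finv (qnum (fun _ => 1))).

Definition S_fun (k : nat) (l : seq nat) : rat :=
  - bernoulli k / (2 * k)%:R + \sum_(x <- l) (x ^ k.-1)%:R.

Definition Gk (k : nat) : fps := fun N =>
  if N == 0%N then - bernoulli k / (2 * k)%:R
  else \sum_(m < N.+1 | (0 < m)%N && (m %| N)%N) (m ^ k.-1)%:R.

(* Main.v *)
Require Import Defs.
From HB Require Import structures.
From mathcomp Require Import all_boot all_order all_algebra.
From mathcomp Require Import boolp zify ring.
Set Implicit Arguments. Unset Strict Implicit. Unset Printing Implicit Defensive.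
Import Order.TTheory GRing.Theory Num.Theory.
Local Open Scope ring_scope.


HB.instance Definition _ := Choice.on fps.

Definition fopp (a : fps) : fps := fun N => - a N.

Lemma faddA : associative fadd.
Proof. by move=> a b c; apply: funext => N; rewrite /fadd addrA. Qed.
Lemma faddC : commutative fadd.
Proof. by move=> a b; apply: funext => N; rewrite /fadd addrC. Qed.
Lemma fadd0 : left_id fzero fadd.
Proof. by move=> a; apply: funext => N; rewrite /fadd /fzero add0r. Qed.
Lemma faddN : left_inverse fzero fopp fadd.
Proof. by move=> a; apply: funext => N; rewrite /fadd /fzero /fopp addNr. Qed.

HB.instance Definition _ := GRing.isZmodule.Build fps faddA faddC fadd0 faddN.

Definition pol (a : fps) (M : nat) : {poly rat} := \poly_(i < M.+1) a i.

Lemma fmul_pol a b M N : (N <= M)%N -> fmul a b N = (pol a M * pol b M)`_N.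
Proof.
move=> NM; rewrite coefM /fmul; apply: eq_bigr => i _.
move: (ltn_ord i) => h; rewrite !coef_poly !ifT //; lia.
Qed.

Lemma coef_pol a M i : (i <= M)%N -> (pol a M)`_i = a i.
Proof. by move=> h; rewrite coef_poly ltnS h. Qed.

Lemma fmulA : associative fmul.
Proof.
move=> a b c; apply: funext => N.
pose pa := pol a N; pose pb := pol b N; pose pc := pol c N.
transitivity ((pa * (pb * pc))`_N); last first.
  rewrite mulrA coefM; apply: eq_bigr => i _; have := ltn_ord i => h.
  by rewrite -(fmul_pol _ _ (_ : i <= N)%N) ?coef_pol //; lia.
rewrite coefM; apply: eq_bigr => i _; have := ltn_ord i => h.
by rewrite -(fmul_pol _ _ (_ : N - i <= N)%N) ?coef_pol //; lia.
Qed.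

Lemma fmulC : commutative fmul.
Proof.
move=> a b; apply: funext => N.
by rewrite !(fmul_pol _ _ (leqnn N)) mulrC.
Qed.

Lemma fmul1 : left_id fone fmul.
Proof.
move=> a; apply: funext => N; rewrite /fmul (bigD1 ord0) //= /fone eqxx mul1r subn0.
rewrite big1 ?addr0 // => i; rewrite -val_eqE /= => /negbTE ->; by rewrite mul0r.
Qed.

Lemma fmulDl : left_distributive fmul fadd.
Proof.
move=> a b c; apply: funext => N; rewrite /fmul /fadd -big_split /=.
by apply: eq_bigr => i _; rewrite mulrDl.
Qed.

Lemma fone_neq0 : fone != fzero.
Proof. apply/eqP => /(congr1 (fun f => f 0%N)); rewrite /fone /fzero /=; apply/eqP; exact: oner_neq0. Qed.

HB.instance Definition _ := GRing.Zmodule_isComNzRing.Build fps fmulA fmulC fmul1 fmulDl fone_neq0.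

Lemma fps_addE (a b : fps) : a + b = fadd a b. Proof. by []. Qed.
Lemma fps_mulE (a b : fps) : a * b = fmul a b. Proof. by []. Qed.
Lemma fps_oneE : (1 : fps) = fone. Proof. by []. Qed.
Lemma fps_zeroE : (0 : fps) = fzero. Proof. by []. Qed.

Lemma size_finv_seq a N : size (finv_seq a N) = N.+1.
Proof. by elim: N => [|N IH] //=; rewrite size_rcons IH. Qed.

Lemma nth_finv_seq a N i : (i <= N)%N -> nth 0 (finv_seq a N) i = Defs.finv a i.
Proof.
elim: N => [|N IH]; first by rewrite leqn0 => /eqP ->.
rewrite leq_eqVlt => /orP [/eqP -> //| h].
by rewrite /= nth_rcons size_finv_seq h IH.
Qed.

Lemma fmul_finv a : a 0%N != 0 -> fmul a (Defs.finv a) = fone.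
Proof.
move=> a0; apply: funext => -[|N].
  by rewrite /fmul big_ord_recl big_ord0 addr0 /fone /Defs.finv /= mulfV.
rewrite /fmul big_ord_recl /= subn0 /fone /=.
rewrite {1}/Defs.finv /= nth_rcons size_finv_seq ltnn eqxx.
set X := (\sum_(i < N.+1) _ * _).
rewrite (eq_bigr (fun i : 'I_N.+1 => a i.+1 * nth 0 (finv_seq a N) (N - i))); last first.
  move=> i _; rewrite subSS nth_finv_seq //; exact: leq_subr.
rewrite -/X.
by rewrite mulrCA mulfV // mulr1 addNr.
Qed.

Lemma iter_Dq m a N : iter m Dq a N = (N ^ m)%:R * a N.
Proof. elim: m => [|m IH] /=; first by rewrite mul1r. by rewrite /Dq IH mulrA -natrM expnSr mulnC. Qed.


Lemma geq_transT : transitive geq.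
Proof. move=> a b c /= h1 h2; exact: leq_trans h2 h1. Qed.
Lemma geq_antiT : antisymmetric geq.
Proof. move=> a b /andP [/= h1 h2]; lia. Qed.
Lemma geq_totalT : total geq.
Proof. move=> a b /=; exact: leq_total. Qed.

Definition partP (N : nat) (l : seq nat) := is_partition l && (sumn l == N).

Definition tpred N := [pred t : N.-tuple 'I_N.+1 | sorted geq (map val t) && (sumn (map val t) == N)].
Definition posf (s : seq nat) := [seq x <- s | (0 < x)%N].
Definition PL N : seq (seq nat) := [seq posf (map val t) | t : N.-tuple 'I_N.+1 <- enum (tpred N)].

Lemma sumn_posf s : sumn (posf s) = sumn s.
Proof. elim: s => //= x s IH; case: x => //= x; by rewrite IH. Qed.

Lemma sorted_posf_split s : sorted geq s -> s = posf s ++ nseq (size s - size (posf s)) 0%N.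
Proof.
elim: s => //= x s IH hs.
have hs' : sorted geq s by exact: (path_sorted hs).
case: x hs => [|x] hs /=.
  have z : all (fun y => y == 0%N) s.
    have := (order_path_min geq_transT hs); apply: sub_all => y /=; by rewrite leqn0.
  have -> : posf s = [::] by rewrite /posf; apply/eqP; rewrite -(filter_pred0 s) (eq_in_filter (a2 := pred0)) //; move=> y /(allP z) /eqP ->.
  rewrite subn0 /=; congr (_ :: _); elim: s z {IH hs hs'} => //= y s IH' /andP [/eqP -> /IH' <-] //.
by rewrite subSS -IH.
Qed.

Lemma size_posf_le s : (size (posf s) <= sumn s)%N.
Proof. elim: s => //= x s IH; case: x => //= x; lia. Qed.

Lemma path_zeros x m : path geq x (nseq m 0%N).
Proof. by elim: m x => //= m IH x; rewrite IH andbT. Qed.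

Lemma sorted_zeros m : sorted geq (nseq m 0%N).
Proof. by case: m => //= m; exact: path_zeros. Qed.

Lemma uniq_PL N : uniq (PL N).
Proof.
rewrite map_inj_in_uniq ?enum_uniq //.
move=> t1 t2; rewrite !mem_enum => /andP [s1 _] /andP [s2 _] e.
apply: val_inj; apply: (inj_map val_inj).
rewrite (sorted_posf_split s1) (sorted_posf_split s2) e !size_map !size_tuple //.
Qed.

Lemma mem_PL N l : (l \in PL N) = partP N l.
Proof.
apply/idP/idP.
  case/mapP => t; rewrite mem_enum => /andP [s1 /eqP sN] ->.
  rewrite /partP /is_partition sumn_posf sN eqxx andbT.
  by rewrite sorted_filter ?s1 //=; [rewrite filter_all | exact: geq_transT].
case/andP => /andP [ls lpos] /eqP lN.
have szl : (size l <= N)%N.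
  rewrite -lN; elim: l lpos {ls lN} => //= x l IH /andP [x0 /IH]; lia.
have lleN : all (fun x => x <= N)%N l.
  apply/allP => x xl; rewrite -lN; elim: l xl {ls lN lpos szl} => //= y l IH.
  rewrite in_cons => /orP [/eqP ->| /IH]; lia.
set s := l ++ nseq (N - size l) 0%N.
have sz : size (map (@inord N) s) == N.
  rewrite size_map size_cat size_nseq subnKC //.
have ms : map val (Tuple sz) = s.
  rewrite /= -map_comp -{2}(map_id s); apply/eq_in_map => x; rewrite mem_cat => /orP [xl| ].
    by rewrite /= inordK // ltnS; exact: (allP lleN).
  by move/nseqP => [-> _] /=; rewrite inordK.
apply/mapP; exists (Tuple sz).
  rewrite mem_enum /tpred inE ms; apply/andP; split.
    rewrite /s; case: l ls {lN lleN szl lpos s sz ms} => [|x l] ls; first exact: sorted_zeros.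
    rewrite /= cat_path; apply/andP; split; [exact: ls | exact: path_zeros].
  by rewrite sumn_cat lN; apply/eqP; elim: (N - _)%N => [|m]; rewrite ?addn0 //=.
rewrite ms /posf filter_cat (all_filterP lpos).
have -> : [seq x <- nseq (N - size l) 0%N | (0 < x)%N] = [::] by elim: (N - _)%N.
by rewrite cats0.
Qed.

Lemma sum_partitionsE N (f : seq nat -> rat) : sum_partitions N f = \sum_(l <- PL N) f l.
Proof.
rewrite /PL big_map /sum_partitions big_enum /=; apply: eq_bigl => t; by rewrite inE.
Qed.


Definition perm_inv (h : seq nat -> rat) := forall s1 s2, perm_eq s1 s2 -> h s1 = h s2.

Lemma partP_sorted N l : partP N l -> sorted geq l.
Proof. by case/andP => /andP []. Qed.

Lemma removal N r h : (0 < r)%N -> (r <= N)%N -> perm_inv h ->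
  \sum_(l <- PL N | r \in l) h l = \sum_(m <- PL (N - r)) h (r :: m).
Proof.
move=> r0 rN hinv.
rewrite [RHS](eq_bigr (fun m => h (sort geq (r :: m)))); last first.
  by move=> m _; apply: hinv; rewrite perm_sym; apply: permEl; exact: perm_sort.
rewrite -(big_map (fun m => sort geq (r :: m)) xpredT h).
transitivity (\sum_(l <- [seq l <- PL N | r \in l]) h l); first by rewrite big_filter.
apply: perm_big; apply: uniq_perm.
- by rewrite filter_uniq // uniq_PL.
- rewrite map_inj_in_uniq ?uniq_PL // => m1 m2; rewrite !mem_PL => p1 p2 /perm_sortP.
  move=> /(_ geq_totalT geq_transT geq_antiT); rewrite perm_cons => pm.
  exact: (sorted_eq geq_transT geq_antiT (partP_sorted p1) (partP_sorted p2) pm).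
move=> l; rewrite mem_filter mem_PL; apply/idP/idP.
  case/andP => rl pl; apply/mapP; exists (rem r l).
    rewrite mem_PL; case/andP: pl => /andP [ls lpos] /eqP lN.
    rewrite /partP /is_partition (subseq_sorted geq_transT (rem_subseq r l) ls) /=.
    apply/andP; split.
      by apply/allP => x /mem_rem xl; exact: (allP lpos).
    by rewrite -lN (perm_sumn (perm_to_rem rl)) /=; apply/eqP; lia.
  apply: (sorted_eq geq_transT geq_antiT (partP_sorted pl)).
    exact: (sort_sorted geq_totalT).
  apply: (perm_trans (perm_to_rem rl)); rewrite perm_sym; apply: permEl; exact: perm_sort.
case/mapP => m; rewrite mem_PL => /andP [/andP [ms mpos] /eqP mN] ->.
rewrite mem_sort mem_head /partP /is_partition (sort_sorted geq_totalT) /=.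
rewrite (perm_all _ (permEl (perm_sort geq _))) /= r0 mpos /=.
by rewrite (perm_sumn (permEl (perm_sort geq _))) /= mN; apply/eqP; lia.
Qed.

Lemma mem_le_sumn (l : seq nat) x : x \in l -> (x <= sumn l)%N.
Proof. elim: l => //= y l IH; rewrite in_cons => /orP [/eqP ->| /IH]; lia. Qed.

Lemma countR r : (0 < r)%N -> forall N g, perm_inv g ->
  \sum_(l <- PL N) (count_mem r l)%:R * g l =
  \sum_(1 <= M < N.+1 | (r %| M)%N) \sum_(m <- PL (N - M)) g (nseq (M %/ r) r ++ m).
Proof.
move=> r0 N; elim/ltn_ind: N => N IH g ginv.
case: (leqP r N) => rN; last first.
  rewrite big1_seq; last first.
    move=> l; rewrite mem_PL => /andP [_ /andP [_ /eqP lN]].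
    have -> : count_mem r l = 0%N.
      apply/count_memPn; apply/negP => /mem_le_sumn; rewrite lN; lia.
    by rewrite mul0r.
  rewrite big_nat_cond big1 // => M /andP [/andP [h1 h2] h3].
  have := dvdn_leq h1 h3; lia.
rewrite (bigID (fun l => r \in l)) /= [X in _ + X]big1 ?addr0; last first.
  by move=> l /count_memPn ->; rewrite mul0r.
rewrite (removal (h := fun l => (count_mem r l)%:R * g l)) //; last first.
  by move=> s1 s2 p; rewrite (permP p) (ginv _ _ p).
have cc m : count_mem r (r :: m) = (count_mem r m).+1 by rewrite /= eqxx.
rewrite (eq_bigr (fun m => (count_mem r m)%:R * g (r :: m) + g (r :: m))); last first.
  move=> m _ /=; rewrite eqxx add1n -addn1 natrD mulrDl mul1r //.

rewrite big_split /= addrC.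
rewrite (IH (N - r)%N _ (fun m => g (r :: m))); last first.
- by move=> s1 s2 p; apply: ginv; rewrite perm_cons.
- lia.
rewrite [RHS](@big_cat_nat _ _ _ r) //; last by apply: leqW.

rewrite /= [X in _ = X + _]big_nat_cond [X in _ = X + _]big1 ?add0r; last first.
  move=> M /andP [/andP [h1 h2] h3]; have := dvdn_leq h1 h3; lia.
rewrite [RHS]big_ltn_cond ?ltnS // dvdnn divnn r0 /=; congr (_ + _).
rewrite -[r.+1]add1n big_addn subSn //.
apply: eq_big => [i|i ri].
  by rewrite dvdn_addl ?dvdnn.

rewrite divnDr // divnn r0 addn1 /=.
by have -> : (N - (i + r) = N - r - i)%N by lia.
Qed.


Section PartRec.
Variables (T : finType) (R : comNzRingType) (w : {set T} -> R).

Lemma part_rec (I : {set T}) x : x \in I ->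
  \sum_(al : {set {set T}} | partition al I) \prod_(A in al) w A =
  \sum_(B : {set T} | B \subset I :\ x)
     w (x |: B) * \sum_(be : {set {set T}} | partition be (I :\ x :\: B)) \prod_(A in be) w A.
Proof.
move=> xI.
rewrite (partition_big (fun al : {set {set T}} => pblock al x :\ x) (fun B => B \subset I :\ x)); last first.
  move=> al pal; apply: setSD.
  have cI : x \in cover al by rewrite (cover_partition pal).
  exact: partitionS pal (pblock_mem cI).
apply: eq_bigr => B BI.
have xB : x \notin B by apply/negP => /(subsetP BI); rewrite !inE eqxx.
set C := x |: B.
have C0 : C != set0 by apply/set0Pn; exists x; rewrite !inE eqxx.
have ID : I = C :|: (I :\ x :\: B).
  apply/setP => y; rewrite !inE; case: (eqVneq y x) => [->|yx] /=; first by rewrite xI.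
  case: (boolP (y \in B)) => yB /=; last by [].
  by have := subsetP BI y yB; rewrite !inE => /andP [_ ->].
have disC : [disjoint C & I :\ x :\: B].
  rewrite -setI_eq0; apply/eqP/setP => y; rewrite !inE.
  by case: (eqVneq y x) => [->|]; case: (y \in B); rewrite ?andbF ?andbT.
rewrite big_distrr /=.
rewrite (reindex_onto (fun be => C |: be) (fun al => al :\ C)); last first.
  move=> al /andP [pal /eqP pB].
  have cI : x \in cover al by rewrite (cover_partition pal).
  have -> : C = pblock al x by rewrite /C -pB setD1K // mem_pblock.
  by rewrite setD1K // pblock_mem.
apply: eq_big => be.
  apply/idP/idP.
    case/andP => /andP [pal /eqP pB] /eqP be_eq.
    have Cnin : C \notin be.
      by apply/negP => Cbe; have := Cbe; rewrite -{1}be_eq !inE eqxx.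
    have := partitionD1 pal (setU11 C be); rewrite setU1K // => h.
    suff -> : I :\ x :\: B = I :\: C by [].
    apply/setP => y; rewrite !inE; case: (eqVneq y x) => //= _.
    by rewrite andbC; case: (y \in B).
  move=> pbe.
  have Cnin : C \notin be.
    apply/negP => Cbe; have := partitionS pbe Cbe; move/subsetP/(_ x).
    by move=> /(_ (setU11 x B)); rewrite !inE eqxx /= ?andbF.
  have pal : partition (C |: be) I by rewrite ID; exact: partitionU1.
  rewrite pal /= setU1K // eqxx andbT.
  rewrite (def_pblock (partition_trivIset pal) (setU11 C be)) ?setU11 //.
  by rewrite /C setU1K.
case/andP => _ /eqP be_eq.
have Cnin : C \notin be.
  by apply/negP => Cbe; have := Cbe; rewrite -{1}be_eq !inE eqxx.
by rewrite big_setU1.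
Qed.

Lemma prod_add_subset (I : finType) (J : {set I}) (F G : I -> R) :
  \prod_(i in J) (F i + G i) =
  \sum_(B : {set I} | B \subset J) (\prod_(i in B) F i * \prod_(i in J :\: B) G i).
Proof.
pose F' i := if i \in J then F i else 0.
pose G' i := if i \in J then G i else 1.
have E := @bigA_distr R 0 1 *%R +%R I F' G'.
have -> : \prod_(i in J) (F i + G i) = \prod_i (F' i + G' i).
  rewrite big_mkcond; apply: eq_bigr => i _; rewrite /F' /G'; by case: (i \in J); rewrite ?add0r.
rewrite E (bigID (fun B : {set I} => B \subset J)) /= [X in _ + X]big1 ?addr0; last first.
  move=> B /subsetPn [i iB iJ].
  rewrite (bigD1 i) //= iB /F' (negbTE iJ) mul0r //.
apply: eq_big => B // BJ.
rewrite (bigID (mem B)) /=; congr (_ * _).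
  apply: eq_big => i // iB.
  by rewrite iB /F' (subsetP BJ i iB).
rewrite big_mkcond [RHS]big_mkcond; apply: eq_bigr => i _.
rewrite /G' !inE; by case: (i \in B); case: (i \in J).
Qed.

End PartRec.


Lemma fps_sum_coef (I : Type) (r : seq I) (P : pred I) (F : I -> fps) N :
  (\sum_(i <- r | P i) F i) N = \sum_(i <- r | P i) F i N.
Proof. by apply: (big_morph (fun f : fps => f N)). Qed.

Lemma fps_mul_coef (a b : fps) N : (a * b) N = \sum_(i < N.+1) a i * b (N - i)%N.
Proof. by []. Qed.

Lemma S_fun_cat k j r m : S_fun k (nseq j r ++ m) = (j * r ^ k.-1)%:R + S_fun k m.
Proof.
rewrite /S_fun big_cat /= addrCA; congr (_ + _).
by elim: j => [|j IH]; rewrite ?big_nil ?mul0n // big_cons IH mulSn natrD.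
Qed.

Lemma perm_inv_S k : perm_inv (S_fun k).
Proof. by move=> s1 s2 p; rewrite /S_fun (perm_big _ p). Qed.

Lemma perm_inv_prod (I : finType) (P : pred I) (F : I -> seq nat -> rat) :
  (forall i, perm_inv (F i)) -> perm_inv (fun l => \prod_(i | P i) F i l).
Proof. by move=> h s1 s2 p; apply: eq_bigr => i _; apply: h. Qed.

Lemma sum_count_seq N (s : seq nat) (F : nat -> rat) : all (fun y => y < N.+1)%N s ->
  \sum_(y <- s) F y = \sum_(0 <= r < N.+1) (count_mem r s)%:R * F r.
Proof.
elim: s => [|y s IH] /=; first by rewrite big_nil big1 // => r _; rewrite mul0r.
case/andP => yN /IH IH'; rewrite big_cons IH'.
under [RHS]eq_bigr => r _ do rewrite natrD mulrDl.
rewrite big_split /=; congr (_ + _).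
rewrite big_mkord (bigD1 (Ordinal yN)) //= eqxx mul1r big1 ?addr0 // => i.
by rewrite -val_eqE /= eq_sym => /negbTE ->; rewrite mul0r.
Qed.

Lemma prodn_exp (I : finType) (B : {set I}) (r : nat) (e : I -> nat) :
  (\prod_(i in B) r ^ e i = r ^ (\sum_(i in B) e i))%N.
Proof. by apply: (big_rec2 (fun x y => x = r ^ y)%N) => [|i x y _ ->]; rewrite ?expnD. Qed.

Lemma divisor_id (I : finType) (B : {set I}) (e : I -> nat) a c M N :
  (0 < M)%N -> (M <= N)%N -> (c.-1 + #|B| = a + \sum_(i in B) e i)%N ->
  \sum_(1 <= r < N.+1 | (r %| M)%N) (r ^ a)%:R * \prod_(i in B) ((M %/ r) * r ^ e i)%:R
  = (M ^ #|B|)%:R * \sum_(m < M.+1 | (0 < m)%N && (m %| M)%N) (m ^ c.-1)%:R :> rat.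
Proof.
move=> M0 MN hc.
rewrite [RHS]big_distrr /=.
rewrite -(@big_mkord _ 0 +%R M.+1 (fun m => (0 < m)%N && (m %| M)%N) (fun m => (M ^ #|B|)%:R * (m ^ c.-1)%:R)).
rewrite [RHS](big_nat_widen _ _ _ _ _ (_ : M.+1 <= N.+1)%N) //.
have -> : \sum_(1 <= r < N.+1 | (r %| M)%N) (r ^ a)%:R * \prod_(i in B) ((M %/ r) * r ^ e i)%:R
   = \sum_(0 <= r < N.+1 | (0 < r)%N && (r %| M)%N) (r ^ a)%:R * \prod_(i in B) ((M %/ r) * r ^ e i)%:R :> rat.
  rewrite [RHS]big_ltn_cond //= big_nat_cond [RHS]big_nat_cond.
  by apply: eq_bigl => r; case: r => //= r; rewrite andbT.
apply: eq_big => r.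
  case: r => //= r; case rM: (r.+1 %| M)%N => //=.
  by rewrite ltnS (dvdn_leq M0 rM).
case/andP => r0 rM.
rewrite -natr_prod -!natrM; congr (_%:R).
rewrite big_split /= prod_nat_const prodn_exp.
rewrite -{2}(divnK rM) expnMn mulnCA -expnD -hc expnD.
ring.
Qed.

Lemma fps_mul_coef_nat (a b : fps) N :
  (a * b) N = a 0%N * b N + \sum_(1 <= i < N.+1) a i * b (N - i)%N.
Proof.
by rewrite fps_mul_coef -(big_mkord xpredT (fun i => a i * b (N - i)%N)) big_ltn // subn0.
Qed.

Lemma Gk_pos K M : (0 < M)%N ->
  Gk K M = \sum_(m < M.+1 | (0 < m)%N && (m %| M)%N) (m ^ K.-1)%:R.
Proof. by rewrite /Gk; case: M. Qed.

Lemma exch_dvd N (H : nat -> nat -> rat) :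
  \sum_(1 <= r < N.+1) \sum_(1 <= M < N.+1 | (r %| M)%N) H r M =
  \sum_(1 <= M < N.+1) \sum_(1 <= r < N.+1 | (r %| M)%N) H r M.
Proof.
under eq_bigr => r _ do rewrite big_mkcond.
rewrite exchange_big; apply: eq_bigr => M _; by rewrite [RHS]big_mkcond.
Qed.

Lemma sum_pred_card (I : finType) (B : {set I}) (k : I -> nat) :
  (forall i, 1 <= k i)%N -> (\sum_(i in B) (k i).-1 + #|B| = \sum_(i in B) k i)%N.
Proof.
move=> hk; rewrite -sum1_card -big_split /=; apply: eq_bigr => i _.
by rewrite addn1 prednK.
Qed.

Lemma sum_ge2 (I : finType) (B : {set I}) (k : I -> nat) :
  (forall i, 2 <= k i)%N -> (2 * #|B| <= \sum_(i in B) k i)%N.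
Proof.
move=> hk; rewrite -sum1_card big_distrr /=; apply: leq_sum => i _; by rewrite muln1.
Qed.


Section Main.
Variables (n : nat) (k : 'I_n -> nat).
Hypothesis hk : forall i, (2 <= k i)%N.

Definition Sprod (J : {set 'I_n}) (l : seq nat) : rat := \prod_(i in J) S_fun (k i) l.
Definition wt (A : {set 'I_n}) : fps :=
  iter (#|A|.-1) Dq (Gk ((\sum_(a in A) k a) + 2 - 2 * #|A|)).

Lemma perm_inv_Sprod J : perm_inv (Sprod J).
Proof. by apply: perm_inv_prod => i; exact: perm_inv_S. Qed.

Lemma Sprod_cat J j r m :
  Sprod J (nseq j r ++ m) =
  \sum_(B : {set 'I_n} | B \subset J)
     \prod_(i in B) (j * r ^ (k i).-1)%:R * Sprod (J :\: B) m.
Proof.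
rewrite /Sprod -prod_add_subset; apply: eq_bigr => i _; exact: S_fun_cat.
Qed.

Lemma wt_coef (x : 'I_n) (B : {set 'I_n}) M : x \notin B ->
  wt (x |: B) M = (M ^ #|B|)%:R * Gk (k x + \sum_(i in B) k i - 2 * #|B|) M.
Proof.
move=> xB; rewrite /wt iter_Dq cardsU1 xB /= add1n big_setU1 //=.
congr (_ * Gk _ _).
have ar (a s b : nat) : (2 * b <= s)%N -> (a + s + 2 - 2 * b.+1 = a + s - 2 * b)%N by move=> h; lia.
by apply: ar; apply: sum_ge2.
Qed.

Lemma mainrec (x : 'I_n) (J : {set 'I_n}) : x \notin J ->
  qnum (fun l => S_fun (k x) l * Sprod J l) =
  \sum_(B : {set 'I_n} | B \subset J) wt (x |: B) * qnum (Sprod (J :\: B)).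
Proof.
move=> xJ; apply: funext => N.
have xB (B : {set 'I_n}) : B \subset J -> x \notin B.
  by move=> BJ; apply/negP => /(subsetP BJ); rewrite (negbTE xJ).
rewrite fps_sum_coef.
under [RHS]eq_bigr => B _ do rewrite fps_mul_coef_nat.
rewrite big_split /=.
rewrite /qnum sum_partitionsE.
rewrite [LHS](eq_bigr (fun l => (- bernoulli (k x) / (2 * k x)%:R) * Sprod J l +
   (\sum_(y <- l) (y ^ (k x).-1)%:R) * Sprod J l)); last by move=> l _; rewrite /S_fun mulrDl.
rewrite big_split /=; congr (_ + _).
  rewrite [RHS](bigD1 set0) ?sub0set //= [X in _ = _ + X]big1 ?addr0; last first.
    move=> B /andP [BJ B0]; rewrite wt_coef ?xB //.
    by move: B0; rewrite -card_gt0; case: #|B| => // m _; rewrite expnS mul0n !mul0r.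
  rewrite wt_coef ?inE // cards0 big_set0 expn0 mul1r setD0 -big_distrr /=.
  by rewrite sum_partitionsE addn0 muln0 subn0.
rewrite [LHS](eq_big_seq (fun l => \sum_(1 <= r < N.+1)
   (r ^ (k x).-1)%:R * ((count_mem r l)%:R * Sprod J l))); last first.
  move=> l; rewrite mem_PL => /andP [_ /eqP lN].
  rewrite (@sum_count_seq N); last by apply/allP => y /mem_le_sumn; rewrite lN ltnS.
  have kx1 : (0 < (k x).-1)%N by have := hk x; lia.
  rewrite big_ltn // exp0n // mulr0 add0r big_distrl /=.
  by apply: eq_bigr => r _; rewrite mulrCA mulrA.
rewrite exchange_big /=.
under eq_bigr => r _ do rewrite -big_distrr /=.
rewrite [LHS](eq_big_nat _ _ (F2 := fun r => \sum_(1 <= M < N.+1 | (r %| M)%N)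
   \sum_(B : {set 'I_n} | B \subset J) (r ^ (k x).-1)%:R *
     (\prod_(i in B) ((M %/ r) * r ^ (k i).-1)%:R * sum_partitions (N - M) (Sprod (J :\: B))))); last first.
  move=> r /andP [r1 _]; rewrite countR //; last exact: perm_inv_Sprod.
  rewrite big_distrr; apply: eq_bigr => M _ /=.
  under eq_bigr => m _ do rewrite Sprod_cat.
  rewrite exchange_big big_distrr; apply: eq_bigr => B _ /=.
  by rewrite sum_partitionsE -big_distrr.
rewrite exch_dvd.
rewrite [LHS](eq_bigr _ (fun M _ => exchange_big _ _ _ _ _ _)) /=.
rewrite exchange_big /=; apply: eq_bigr => B BJ.
apply: eq_big_nat => M /andP [M1 MN].
rewrite [LHS](eq_bigr _ (fun r _ => mulrA _ _ _)) -big_distrl /= wt_coef ?xB //; congr (_ * _).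
rewrite Gk_pos //; apply: divisor_id => //.
have ar (a s t b : nat) : (2 <= a)%N -> (2 * b <= s)%N -> (t + b = s)%N ->
  ((a + s - 2 * b).-1 + b = a.-1 + t)%N by move=> *; lia.
apply: ar; [exact: hk | exact: sum_ge2 | apply: sum_pred_card => i; have := hk i; lia].
Qed.

End Main.


Section Final.
Variables (n : nat) (k : 'I_n -> nat).
Hypothesis hk : forall i, (2 <= k i)%N.

Definition W (I : {set 'I_n}) : fps :=
  \sum_(al : {set {set 'I_n}} | partition al I) \prod_(A in al) wt k A.

Definition Pq : fps := qnum (fun _ => 1).

Lemma W0 : W set0 = 1.
Proof.
rewrite /W (eq_bigl (fun al => al == set0)); last by move=> al; rewrite partition_set0.
by rewrite big_pred1_eq big_set0.
Qed.

Lemma qnum_Sprod m : forall I : {set 'I_n}, (#|I| <= m)%N -> qnum (Sprod k I) = Pq * W I.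
Proof.
elim: m => [|m IH] I.
  rewrite leqn0 cards_eq0 => /eqP ->; rewrite W0 mulr1 /Pq.
  by congr qnum; apply: funext => l; rewrite /Sprod big_set0.
case: (set_0Vmem I) => [->|[x xI]] cI.
  rewrite W0 mulr1 /Pq.
  by congr qnum; apply: funext => l; rewrite /Sprod big_set0.
have -> : Sprod k I = fun l => S_fun (k x) l * Sprod k (I :\ x) l.
  apply: funext => l; rewrite /Sprod (bigD1 x) //=; congr (_ * _).
  by apply: eq_bigl => i; rewrite !inE andbC.
rewrite (mainrec hk) //; last by rewrite !inE eqxx.
rewrite /W (part_rec (wt k) xI) mulr_sumr; apply: eq_bigr => B BI.
rewrite IH; first by rewrite mulrCA.
have : (#|I :\ x| < #|I|)%N by rewrite (cardsD1 x I) xI.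
have : (#|I :\ x :\: B| <= #|I :\ x|)%N by apply: subset_leq_card; apply: subsetDl.
lia.
Qed.

Lemma Pq0 : Pq 0%N = 1.
Proof.
rewrite /Pq /qnum sum_partitionsE.
rewrite (perm_big [:: [::]]) ?big_seq1 //.
apply: uniq_perm; rewrite ?uniq_PL // => l; rewrite mem_PL inE.
apply/idP/eqP => [|->] //.
case: l => // x l /andP [/andP [_ /andP [x0 _]] /=]; lia.
Qed.

End Final.

Theorem theorem3p3p1 (n : nat) (k : 'I_n -> nat) :
  (1 <= n)%N ->
  (forall i, (0 < k i)%N /\ ~~ odd (k i)) ->
  forall N : nat,
    qbracket (fun l => \prod_(i < n) S_fun (k i) l) N =
    (\big[fadd/fzero]_(alpha : {set {set 'I_n}} | partition alpha [set: 'I_n])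
       \big[fmul/fone]_(A in alpha)
          iter (#|A|.-1) Dq
            (Gk ((\sum_(a in A) k a) + 2 - 2 * #|A|)%N)) N.
Proof.
move=> _ hev N.
have hk : forall i, (2 <= k i)%N.
  by move=> i; case: (hev i); case: (k i) => [|[|m]].
change (qbracket (fun l => \prod_(i < n) S_fun (k i) l) N = W k setT N).
have -> : (fun l => \prod_(i < n) S_fun (k i) l) = Sprod k setT.
  by apply: funext => l; rewrite /Sprod; apply: eq_bigl => i; rewrite inE.
rewrite /qbracket (qnum_Sprod hk (leqnn _)) -/(Pq).
change (((Pq * W k setT) * Defs.finv Pq) N = W k setT N).
have e : Pq * Defs.finv Pq = 1 by apply: fmul_finv; rewrite Pq0 oner_neq0.
by rewrite -mulrA [W k _ * _]mulrC mulrA e mul1r.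
Qed.
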